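(* For every hypothesis class $\mathcal{H}\subseteq\{0,1\}^{\mathcal{X}}$, $\mathtt{LD}(\mathcal{H})\le\mathtt{CD}(\mathcal{H})$.
   Context: A dataset of size $m$ is $S=((x_1,y_1),\dots,(x_m,y_m))\in(\mathcal{X}\times\{0,1\})^m$; it is $\mathcal{H}$-realizable if some $h\in\mathcal{H}$ satisfies $h(x_i)=y_i$ for all $i$. $G_m(\mathcal{H})$ is the graph on realizable datasets of size $m$ with $S,S'$ adjacent iff there is $x$ with $(x,0)$ appearing in $S$ and $(x,1)$ appearing in $S'$; $\omega_m$ is its clique number; $\mathtt{CD}(\mathcal{H})=\sup\{m:\omega_m=2^m\}\in\mathbb{N}\cup\{\infty\}$. A mistake tree is a complete binary tree whose internal nodes are labeled by points of $\mathcal{X}$, each internal node having one outgoing edge labeled $0$ and one labeled $1$; a root-to-leaf path yields the sequence $(x_1,y_1),\dots,(x_d,y_d)$ of node labels and edge labels. $\mathcal{H}$ shatters the tree if every root-to-leaf path is realizable by $\mathcal{H}$. $\mathtt{LD}(\mathcal{H})$ is the largest $d$ such that a complete mistake tree of depth $d$ is shattered by $\mathcal{H}$ ($\infty$ if arbitrarily deep ones exist). *)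

(* Defs.v *)
From HB Require Import structures.
From mathcomp Require Import all_boot all_order all_algebra.
From mathcomp Require Import classical_sets boolp reals constructive_ereal ereal.
From mathcomp Require Import Rstruct.
Set Implicit Arguments. Unset Strict Implicit. Unset Printing Implicit Defensive.
Import Order.TTheory GRing.Theory Num.Theory.
Local Open Scope classical_set_scope.
Local Open Scope ring_scope.

(* Extended values (sups of sets of naturals, with sup of the empty set = -oo
   and unbounded sets having sup +oo) live in \bar R, R = Stdlib reals. *)
Notation ER := (\bar Rdefinitions.R).
Definition natE (n : nat) : ER := (n%:R)%:E.
Definition esupN (A : set nat) : ER := ereal_sup [set natE n | n in A].

Section LearningDims.
Variable X : Type.
Implicit Type H : set (X -> bool).

Definition realizable H (S : seq (X * bool)) : Prop :=
  exists2 h, H h & forall xy, List.In xy S -> h xy.1 = xy.2.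

Definition dataset (m : nat) := m.-tuple (X * bool).

Definition adjacent m (S S' : dataset m) : Prop :=
  exists x, (List.In (x, false) (val S) /\ List.In (x, true) (val S')) \/
            (List.In (x, true) (val S) /\ List.In (x, false) (val S')).

Definition is_clique H m k (f : 'I_k -> dataset m) : Prop :=
  [/\ injective f, (forall i, realizable H (val (f i)))
    & (forall i j, i != j -> adjacent (f i) (f j))].

Definition omega H (m : nat) : ER :=
  esupN [set k | exists f : 'I_k -> dataset m, is_clique H f].

Definition CD H : ER := esupN [set m | omega H m = natE (2 ^ m)].

(* mistake trees: internal nodes labelled by points; left subtree = edge 0,
   right subtree = edge 1 *)
Inductive mtree : Type :=
| Leaf : mtree
| Node : X -> mtree -> mtree -> mtree.

Fixpoint complete (d : nat) (t : mtree) : Prop :=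
  match d, t with
  | 0, Leaf => True
  | d'.+1, Node _ l r => complete d' l /\ complete d' r
  | _, _ => False
  end.

Fixpoint branches (t : mtree) : seq (seq (X * bool)) :=
  match t with
  | Leaf => [:: [::]]
  | Node x l r => map (cons (x, false)) (branches l) ++ map (cons (x, true)) (branches r)
  end.

Definition shatters H (t : mtree) : Prop :=
  forall p, List.In p (branches t) -> realizable H p.

Definition LD H : ER := esupN [set d | exists t, complete d t /\ shatters H t].

End LearningDims.

(* Main.v *)
Require Import Defs.
From mathcomp Require Import all_boot all_order all_algebra.
From mathcomp Require Import classical_sets boolp reals constructive_ereal ereal.
From mathcomp Require Import Rstruct.
From mathcomp Require Import zify.
Set Implicit Arguments. Unset Strict Implicit. Unset Printing Implicit Defensive.
Import Order.TTheory GRing.Theory Num.Theory.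


Section Comb.
Variable Y : eqType.
Notation D := (seq (Y * bool)).

Lemma InP (T : eqType) (p : T) (s : seq T) : List.In p s <-> p \in s.
Proof.
elim: s => [|q s IH] /=; first by split.
rewrite inE; split.
  by case=> [->|/IH ->]; rewrite ?eqxx ?orbT.
by case/orP=> [/eqP ->|/IH]; [left|right].
Qed.

Definition conflict (S T : D) : bool := has (fun p => (p.1, ~~ p.2) \in T) S.
Definition rmx (x : Y) (S : D) : D := seq.filter (fun p => p.1 != x) S.

Lemma conflict_sub S S' T T' : {subset S <= S'} -> {subset T <= T'} ->
  conflict S T -> conflict S' T'.
Proof.
move=> sS sT /hasP [p pS pT]; apply/hasP; exists p; [exact: sS| exact: sT].
Qed.

Lemma conflict_rmx x c S T : (x, ~~ c) \notin S -> (x, ~~ c) \notin T ->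
  conflict S T -> conflict (rmx x S) (rmx x T).
Proof.
move=> nS nT /hasP [[y b] pS pT]; apply/hasP; exists (y, b).
  rewrite mem_filter /= pS andbT; apply/eqP=> yx; subst y.
  by case: b c pS pT nS nT => [] [] /= pS pT; rewrite ?pS ?pT.
rewrite mem_filter /= pT andbT; apply/eqP=> yx; subst y.
by case: b c pS pT nS nT => [] [] /= pS pT; rewrite ?pS ?pT.
Qed.

Lemma size_rmx x S : size (rmx x S) <= size S.
Proof. by rewrite size_filter count_size. Qed.
Lemma size_rmx_lt x c S : (x, c) \in S -> size (rmx x S) < size S.
Proof.
move=> xS; rewrite /rmx size_filter -(count_predC (fun p => p.1 != x) S).
rewrite -{1}[count _ _]addn0 ltn_add2l -has_count; apply/hasP; exists (x, c) => //=.
by rewrite eqxx.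
Qed.

Lemma clique_bound M n (F : seq D) :
  \sum_(S <- F) size S < n ->
  all (fun S => ~~ conflict S S) F -> pairwise conflict F ->
  all (fun S => size S <= M) F ->
  \sum_(S <- F) 2 ^ (M - size S) <= 2 ^ M.
Proof.
elim: n F => [|n IH] F //.
case: F => [|S0 F'] Hsz Hcons Hpw Hsize; first by rewrite big_nil.
case: S0 Hsz Hcons Hpw Hsize => [|[x b] R] Hsz Hcons Hpw Hsize.
  move: Hpw; rewrite /= => /andP [Ha _].
  case: F' Ha {Hsz Hcons Hsize} => [|T F'] //= _.
  by rewrite big_cons big_nil subn0 addn0.
set G := ((x, b) :: R) :: F'.
have HG c : \sum_(S <- G | (x, ~~ c) \notin S) 2 ^ (M - size (rmx x S)) <= 2 ^ M.
  rewrite -big_filter -(big_map (rmx x) xpredT (fun S => 2 ^ (M - size S))).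
  apply: (IH _ ).
  - rewrite big_map big_filter.
    rewrite -ltnS; apply: leq_trans _ Hsz; rewrite ltnS /G !big_cons.
    have Hr : \sum_(j <- F' | (x, ~~ c) \notin j) size (rmx x j) <= \sum_(S <- F') size S.
      rewrite big_mkcond /=; apply: leq_sum => S _.
      case: ifP => _ //; exact: size_rmx.
    case: ifP => _.
      rewrite ltnS; apply: leq_add => //.
      have := @size_rmx_lt x b ((x, b) :: R); rewrite mem_head => /(_ isT).
      by [].
    by rewrite ltnS; apply: leq_trans Hr _; apply: leq_addl.
  - rewrite all_map; apply/allP => S; rewrite mem_filter => /andP [_ SG] /=.
    move/allP: Hcons => /(_ S SG); apply: contra.
    by apply: conflict_sub => p; rewrite mem_filter => /andP [].
  - rewrite pairwise_map.
    have := pairwise_filter (fun S => (x, ~~ c) \notin S) Hpw.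
    apply: sub_in_pairwise (filter_all _ _) => S T; rewrite /= => nS nT.
    exact: conflict_rmx nS nT.
  - rewrite all_map; apply/allP => S; rewrite mem_filter => /andP [_ SG] /=.
    apply: leq_trans (size_rmx _ _) _; exact: (allP Hsize).
have Hsum : \sum_(S <- G) (2 ^ (M - size S) + 2 ^ (M - size S)) <=
   \sum_(S <- G | (x, ~~ true) \notin S) 2 ^ (M - size (rmx x S)) +
   \sum_(S <- G | (x, ~~ false) \notin S) 2 ^ (M - size (rmx x S)).
  rewrite [X in _ <= X + _]big_mkcond [X in _ <= _ + X]big_mkcond -big_split /=.
  rewrite big_seq [X in _ <= X]big_seq; apply: leq_sum => S SG.
  have cS := allP Hcons S SG; have sM := allP Hsize S SG.
  have le1 : 2 ^ (M - size S) <= 2 ^ (M - size (rmx x S)).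
    apply: leq_pexp2l => //; have := size_rmx x S; move: sM; move: (size S) (size (rmx x S)) => a a'; lia.
  have lt1 c : (x, c) \in S -> 2 ^ (M - size S) + 2 ^ (M - size S) <= 2 ^ (M - size (rmx x S)).
    move=> xS; rewrite addnn -mul2n -expnS; apply: leq_pexp2l => //.
    have := size_rmx_lt xS; move: sM; move: (size S) (size (rmx x S)) => a a'; lia.
  have nboth : ~~ (((x, false) \in S) && ((x, true) \in S)).
    apply: contra cS => /andP [h1 h2]; apply/hasP; exists (x, false) => //.
  case: (boolP ((x, false) \in S)) => h0; case: (boolP ((x, true) \in S)) => h1.
  - by rewrite h0 h1 in nboth.
  - by rewrite /= add0n; exact: lt1 h0.
  - by rewrite /= addn0; exact: lt1 h1.
  - by rewrite /=; apply: leq_add.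
rewrite big_split /= in Hsum.
have := leq_trans Hsum (leq_add (HG true) (HG false)).
by rewrite !addnn leq_double.
Qed.

Lemma conflict_cons a p q : conflict p q -> conflict (a :: p) (a :: q).
Proof. by apply: conflict_sub => z zi; rewrite inE zi orbT. Qed.

Lemma conflictC S T : conflict S T -> conflict T S.
Proof.
move=> /hasP [[y b] pS pT]; apply/hasP; exists (y, ~~ b) => //=.
by rewrite negbK.
Qed.

Lemma pairwise_uniq (T : eqType) (r : rel T) (s : seq T) : uniq s ->
  (forall a c, a \in s -> c \in s -> a != c -> r a c) -> pairwise r s.
Proof.
elim: s => [|a s IH] //= /andP [ns us] Hr; apply/andP; split.
  apply/allP => c cs; apply: Hr; rewrite ?inE ?eqxx ?cs ?orbT //.
  by apply: contraNneq ns => ->.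
apply: IH => // u v us' vs' uv; apply: Hr => //; by rewrite inE ?us' ?vs' orbT.
Qed.

Lemma tree_props (d : nat) (t : mtree Y) : complete d t ->
  [/\ size (branches t) = 2 ^ d, all (fun p => size p == d) (branches t)
    & pairwise conflict (branches t)].
Proof.
elim: d t => [|d IH] [|x l r] //= ct.
case: ct => /IH [sl al pl] /IH [sr ar pr]; split.
- by rewrite size_cat !size_map sl sr expnS mul2n addnn.
- rewrite all_cat !all_map; apply/andP; split.
    by apply/allP => p pl' /=; rewrite eqSS (allP al).
  by apply/allP => p pr' /=; rewrite eqSS (allP ar).
- rewrite pairwise_cat !pairwise_map; apply/and3P; split.
  + apply/allrelP => u v /mapP [p _ ->] /mapP [q _ ->].
    by apply/hasP; exists (x, false); rewrite ?mem_head //= mem_head.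
  + by apply: sub_pairwise pl => p q; apply: conflict_cons.
  + by apply: sub_pairwise pr => p q; apply: conflict_cons.
Qed.
End Comb.

Lemma real_cons (X : Type) (H : set (X -> bool)) (S : seq ({classic X} * bool)) :
  realizable H S -> ~~ conflict S S.
Proof.
move=> [h _ hS]; apply/negP => /hasP [[y b] pS pT].
have e1 := hS _ (proj2 (InP _ _) pS); have e2 := hS _ (proj2 (InP _ _) pT).
simpl in e1, e2; rewrite e1 in e2; by move: e2; case: (b).
Qed.

Theorem mainTheorem9 (X : Type) (H : set (X -> bool)) : (LD H <= CD H)%E.
Proof.
rewrite /LD /CD /esupN; apply: ereal_sup_le.
move=> _ [d [t [ct sh]] <-]; exists d => //.
pose Y := {classic X}.
have [szB alB pwB] := @tree_props Y d t ct.
apply/eqP; rewrite eq_le; apply/andP; split.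
- apply: ge_ereal_sup => _ [k [f [finj freal fadj]] <-].
  rewrite /natE lee_fin ler_nat.
  pose F : seq (seq (Y * bool)) := [seq val (f i) | i <- enum 'I_k].
  have := @clique_bound Y d (\sum_(S <- F) size S).+1 F (ltnSn _).
  rewrite big_map.
  have -> : \sum_(j <- enum 'I_k) 2 ^ (d - size (val (f j))) = k.
    rewrite (eq_bigr (fun _ => 1)); last by move=> i _; rewrite size_tuple subnn.
    by rewrite sum1_size size_enum_ord.
  apply.
  + by rewrite all_map; apply/allP => i _ /=; apply: real_cons (freal i).
  + rewrite pairwise_map; apply: pairwise_uniq (enum_uniq _) _ => i j _ _ ij /=.
    have [z [[h1 h2]|[h1 h2]]] := fadj i j ij.
      by apply/hasP; exists (z, false) => //=; apply/InP.
    by apply/hasP; exists (z, true) => //=; apply/InP.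
  + by rewrite all_map; apply/allP => i _ /=; rewrite size_tuple.
- apply: ereal_sup_ubound; exists (2 ^ d) => //.
  set B : seq (seq (Y * bool)) := branches t in szB alB pwB.
  have inB (i : 'I_(2 ^ d)) : nth [::] B i \in B by rewrite mem_nth // szB.
  have szP (i : 'I_(2 ^ d)) : size (nth [::] B i) == d := allP alB _ (inB i).
  have realB (i : 'I_(2 ^ d)) : realizable H (nth [::] B i).
    by apply: sh; exact: (proj2 (@InP (seq (Y * bool) : eqType) _ _) (inB i)).
  have cB (i j : 'I_(2 ^ d)) : i != j -> conflict (nth [::] B i) (nth [::] B j).
    move=> ij; move/pairwiseP: pwB => P.
    have iB : nat_of_ord i \in gtn (size B) by rewrite inE szB.
    have jB : nat_of_ord j \in gtn (size B) by rewrite inE szB.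
    case: (ltngtP i j) => [lt|gt|eq]; first exact: P.
      by apply: conflictC; apply: P.
    by move: ij; rewrite -val_eqE /= eq eqxx.
  exists (fun i => (Tuple (szP i) : dataset X d)); split.
  + move=> i j eqij; apply/eqP; apply: contraT => ij.
    have := cB i j ij; move: eqij => /(congr1 val) /= ->.
    by move=> hc; move: (real_cons (realB j)); rewrite hc.
  + by move=> i; exact: realB.
  + move=> i j ij; have /hasP [[z b] p1 p2] := cB i j ij.
    exists z; case: b p1 p2 => /= p1 p2; [right|left]; split; exact: (proj2 (@InP ((Y * bool)%type : eqType) _ _)).
Qed.
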